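(* Assume Hypotheses 1 and 2 (see context). For any $x_1,x_2\in U$ and $t_0>0$, if $x_2\in\mathcal{C}(x_1)$, $\Phi([0,t_0],x_1)\subset U$ and $\Phi([0,t_0],x_2)\subset U$, then $\Phi(t,x_2)\in\mathcal{C}(\Phi(t,x_1))$ for all $t\in[0,t_0]$.
   Context: System $\dot a=f(a,z)$, $\dot z=g(a,z)$, $(a,z)\in\mathbb{R}^n\times\mathbb{R}^m$, $x=(a,z)$, $X=\mathbb{R}^n\times\mathbb{R}^m$, with flow $\Phi(t,x)$; Euclidean inner product, norm, operator norm. $\mathcal{L}(x_1,x_2)=\|a_2-a_1\|^2-\|z_2-z_1\|^2$ for $x_i=(a_i,z_i)$; $\mathcal{C}(x)=\{x'\in X:\mathcal{L}(x',x)\ge0\}$; $\mathbb{B}_d(x)=\{(a',z'):\|a'-a\|\le d,\|z'-z\|\le d\}$. Hypothesis 1: $U$ is open and convex in $\mathbb{R}^n\times\mathbb{R}^m$, and there is $d>0$ with $\mathcal{C}(x)\cap U\subset\mathbb{B}_d(x)$ for all $x\in U$. Hypothesis 2: $f,g$ are $C^1$ on $U$; there exist a continuous positive $\alpha:U\to\mathbb{R}$, a continuous nonnegative $\ell:U\to\mathbb{R}$ and $c_1>0$ with, for all $x\in U$: $\langle a',D_af(x)a'\rangle\ge\alpha(x)\|a'\|^2$ for all $a'$; $\langle z',D_zg(x)z'\rangle\le\ell(x)\|z'\|^2$ for all $z'$; $\alpha(x)\ge\ell(x)+\|D_zf(x)\|+\|D_ag(x)\|+c_1$. *)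

(* Defs.v *)
From mathcomp Require Import all_boot.
From Stdlib Require Import Reals ClassicalEpsilon.
Local Open Scope R_scope.

Definition vec (n : nat) := 'I_n -> R.

Definition vadd {n} (u v : vec n) : vec n := fun i => u i + v i.
Definition vsub {n} (u v : vec n) : vec n := fun i => u i - v i.
Definition vscal {n} (c : R) (u : vec n) : vec n := fun i => c * u i.

Definition dot {n} (u v : vec n) : R := \big[Rplus/0]_(i < n) (u i * v i).
Definition norm {n} (u : vec n) : R := sqrt (dot u u).

(* X = R^n x R^m, points x = (a, z) *)
Definition X (n m : nat) := (vec n * vec m)%type.
Definition xsub {n m} (x y : X n m) : X n m := (vsub x.1 y.1, vsub x.2 y.2).
Definition xadd {n m} (x y : X n m) : X n m := (vadd x.1 y.1, vadd x.2 y.2).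
Definition xscal {n m} (c : R) (x : X n m) : X n m := (vscal c x.1, vscal c x.2).
Definition xnorm {n m} (x : X n m) : R := sqrt (dot x.1 x.1 + dot x.2 x.2).

Definition is_linear {p q} (L : vec p -> vec q) : Prop :=
  forall (u v : vec p) (c : R),
    L (vadd u v) = vadd (L u) (L v) /\ L (vscal c u) = vscal c (L u).
Definition opnorm {p q} (L : vec p -> vec q) : R :=
  epsilon (inhabits 0)
    (fun s => is_lub (fun r => exists v : vec p, norm v <= 1 /\ r = norm (L v)) s).

Definition is_open_X {n m} (U : X n m -> Prop) : Prop :=
  forall x, U x -> exists e, 0 < e /\ forall y, xnorm (xsub y x) < e -> U y.
Definition is_convex_X {n m} (U : X n m -> Prop) : Prop :=
  forall x y (s : R), U x -> U y -> 0 <= s <= 1 ->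
    U (xadd x (xscal s (xsub y x))).

Definition cont_on {n m k} (U : X n m -> Prop) (h : X n m -> vec k) : Prop :=
  forall x, U x -> forall eps, 0 < eps -> exists delta, 0 < delta /\
    forall y, U y -> xnorm (xsub y x) < delta -> norm (vsub (h y) (h x)) < eps.
Definition cont_on_R {n m} (U : X n m -> Prop) (h : X n m -> R) : Prop :=
  forall x, U x -> forall eps, 0 < eps -> exists delta, 0 < delta /\
    forall y, U y -> xnorm (xsub y x) < delta -> Rabs (h y - h x) < eps.

Definition frechet {n m k} (F : X n m -> vec k)
    (DA : vec n -> vec k) (DZ : vec m -> vec k) (x : X n m) : Prop :=
  is_linear DA /\ is_linear DZ /\
  forall eps, 0 < eps -> exists delta, 0 < delta /\
    forall y, xnorm (xsub y x) < delta ->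
      norm (vsub (vsub (F y) (F x))
                 (vadd (DA (xsub y x).1) (DZ (xsub y x).2)))
        <= eps * xnorm (xsub y x).

Definition C1_on {n m k} (U : X n m -> Prop) (F : X n m -> vec k)
    (DA : X n m -> vec n -> vec k) (DZ : X n m -> vec m -> vec k) : Prop :=
  (forall x, U x -> frechet F (DA x) (DZ x) x) /\
  (forall v, cont_on U (fun x => DA x v)) /\
  (forall w, cont_on U (fun x => DZ x w)).

Definition Lfun {n m} (x1 x2 : X n m) : R :=
  norm (vsub x2.1 x1.1) ^ 2 - norm (vsub x2.2 x1.2) ^ 2.
Definition cone {n m} (x : X n m) (x' : X n m) : Prop := Lfun x' x >= 0.
Definition boxB {n m} (d : R) (x : X n m) (x' : X n m) : Prop :=
  norm (vsub x'.1 x.1) <= d /\ norm (vsub x'.2 x.2) <= d.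

(* phi : R -> X solves  a' = f(a,z), z' = g(a,z)  at every t in [0, t0]
   (two-sided derivatives, coordinatewise) *)
Definition solves_on {n m} (f : X n m -> vec n) (g : X n m -> vec m)
    (phi : R -> X n m) (t0 : R) : Prop :=
  forall t, 0 <= t <= t0 ->
    (forall i : 'I_n, derivable_pt_lim (fun s => (phi s).1 i) t (f (phi t) i)) /\
    (forall j : 'I_m, derivable_pt_lim (fun s => (phi s).2 j) t (g (phi t) j)).

(* Main.v *)
From HB Require Import structures.
Require Import Defs.
From mathcomp Require Import all_boot.
From Stdlib Require Import Reals Lra Psatz ClassicalEpsilon FunctionalExtensionality.
Local Open Scope R_scope.
HB.instance Definition _ := Monoid.isComLaw.Build R 0 Rplus (fun a b c => esym (Rplus_assoc a b c)) Rplus_comm Rplus_0_l.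

Lemma sum_mull (I : Type) (r : seq I) (P : pred I) (F : I -> R) c :
  \big[Rplus/0]_(i <- r | P i) (c * F i) = c * \big[Rplus/0]_(i <- r | P i) F i.
Proof. apply: (big_rec2 (fun x y => x = c * y)); [ring | move=> i x y _ ->; ring]. Qed.

Lemma sum_ge0 (I : Type) (r : seq I) (P : pred I) (F : I -> R) :
  (forall i, 0 <= F i) -> 0 <= \big[Rplus/0]_(i <- r | P i) F i.
Proof. move=> H; apply: (big_ind (fun x => 0 <= x)) => //; [lra| move=> x y; lra]. Qed.

Lemma sum_le (I : Type) (r : seq I) (P : pred I) (F G : I -> R) :
  (forall i, F i <= G i) -> \big[Rplus/0]_(i <- r | P i) F i <= \big[Rplus/0]_(i <- r | P i) G i.
Proof. move=> H; apply: (big_rec2 (fun x y => x <= y)); [lra | move=> i x y _ h; have := H i; lra]. Qed.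

Lemma sum_opp (I : Type) (r : seq I) (P : pred I) (F : I -> R) :
  \big[Rplus/0]_(i <- r | P i) (- F i) = - \big[Rplus/0]_(i <- r | P i) F i.
Proof. apply: (big_rec2 (fun x y => x = - y)); [ring | move=> i x y _ ->; ring]. Qed.

Lemma sum_sub (I : Type) (r : seq I) (P : pred I) (F G : I -> R) :
  \big[Rplus/0]_(i <- r | P i) (F i - G i) = \big[Rplus/0]_(i <- r | P i) F i - \big[Rplus/0]_(i <- r | P i) G i.
Proof. rewrite /Rminus -sum_opp -big_split //. Qed.

Section Vec.
Context {n : nat}.
Implicit Types u v w : vec n.

Lemma dotC u v : dot u v = dot v u.
Proof. rewrite /dot; apply: eq_bigr => i _; ring. Qed.
Lemma dotDr u v w : dot u (vadd v w) = dot u v + dot u w.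
Proof. rewrite /dot -big_split /=; apply: eq_bigr => i _; rewrite /vadd; ring. Qed.
Lemma dotBr u v w : dot u (vsub v w) = dot u v - dot u w.
Proof. rewrite /dot -sum_sub /=; apply: eq_bigr => i _; rewrite /vsub; ring. Qed.
Lemma dotZr c u v : dot u (vscal c v) = c * dot u v.
Proof. rewrite /dot -sum_mull; apply: eq_bigr => i _; rewrite /vscal; ring. Qed.
Lemma dotDl u v w : dot (vadd v w) u = dot v u + dot w u.
Proof. by rewrite dotC dotDr dotC (dotC u). Qed.
Lemma dotBl u v w : dot (vsub v w) u = dot v u - dot w u.
Proof. by rewrite dotC dotBr dotC (dotC u). Qed.
Lemma dotZl c u v : dot (vscal c v) u = c * dot v u.
Proof. by rewrite dotC dotZr dotC. Qed.
Lemma dot_ge0 u : 0 <= dot u u.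
Proof. apply: sum_ge0 => i; nra. Qed.
Lemma norm_ge0 u : 0 <= norm u.
Proof. apply: sqrt_pos. Qed.
Lemma norm_sq u : norm u ^ 2 = dot u u.
Proof. rewrite /norm /= Rmult_1_r sqrt_sqrt //; apply: dot_ge0. Qed.
Lemma coord_le u i : u i * u i <= dot u u.
Proof.
rewrite /dot (bigD1 i) //=. have hj : forall j, 0 <= u j * u j by move=> j; nra.
rewrite -{1}(Rplus_0_r (u i * u i)); apply: Rplus_le_compat_l; exact: sum_ge0.
Qed.

Lemma CS_sq u v : dot u v * dot u v <= dot u u * dot v v.
Proof.
have H t : 0 <= dot u u + 2 * t * dot u v + t * t * dot v v.
  have := dot_ge0 (vadd u (vscal t v)).
  rewrite !dotDl !dotDr !dotZl !dotZr (dotC v u). lra.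
have hA := dot_ge0 u; have hC := dot_ge0 v.
destruct (Rle_lt_or_eq_dec 0 (dot v v) hC) as [hC'|hC'].
- have := H (- dot u v / dot v v).
  have e : forall A B C, 0 < C -> A + 2 * (- B / C) * B + (- B / C) * (- B / C) * C = (A * C - B * B) / C.
    move=> A B C hc; field; lra.
  rewrite e // => h.
  have : 0 <= (dot u u * dot v v - dot u v * dot u v) by
    apply: (Rmult_le_reg_r (/ dot v v)); [apply Rinv_0_lt_compat; lra| rewrite Rmult_0_l; exact h].
  lra.
- rewrite -hC'.
  destruct (Req_dec (dot u v) 0) as [e|ne]; first (rewrite e; lra).
  have := H (- (dot u u + 1) / (2 * dot u v)).
  rewrite -hC'.
  have -> : dot u u + 2 * (- (dot u u + 1) / (2 * dot u v)) * dot u v + - (dot u u + 1) / (2 * dot u v) * (- (dot u u + 1) / (2 * dot u v)) * 0 = -1 by field.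
  lra.
Qed.

Lemma CS u v : Rabs (dot u v) <= norm u * norm v.
Proof.
rewrite /norm -sqrt_mult; try apply: dot_ge0.
rewrite -sqrt_Rsqr_abs; apply: sqrt_le_1_alt. rewrite /Rsqr. apply: CS_sq.
Qed.

Lemma dot_le u v : dot u v <= norm u * norm v.
Proof. have := CS u v; have := Rle_abs (dot u v); lra. Qed.
Lemma dot_ge u v : - (norm u * norm v) <= dot u v.
Proof. have := CS u v; have := Rle_abs (- dot u v); rewrite Rabs_Ropp; lra. Qed.

Lemma norm_scal c u : norm (vscal c u) = Rabs c * norm u.
Proof.
rewrite /norm dotZl dotZr -Rmult_assoc sqrt_mult; [|nra|apply dot_ge0].
by rewrite -[c * c]/(Rsqr c) sqrt_Rsqr_abs.
Qed.
End Vec.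
Definition vzero {p} : vec p := fun _ => 0.
Lemma dot0 p (u : vec p) : dot u vzero = 0.
Proof. rewrite /dot big1 // => i _; rewrite /vzero; ring. Qed.
Lemma norm0 p : norm (@vzero p) = 0.
Proof. by rewrite /norm dot0 sqrt_0. Qed.

Lemma sum_abs (I : Type) (r : seq I) (P : pred I) (F : I -> R) :
  Rabs (\big[Rplus/0]_(i <- r | P i) F i) <= \big[Rplus/0]_(i <- r | P i) Rabs (F i).
Proof.
apply: (big_rec2 (fun x y => Rabs x <= y)); first by rewrite Rabs_R0; lra.
move=> i x y _ h; have := Rabs_triang (F i) x; lra.
Qed.

Section Lin.
Variables p q : nat.
Variable D : vec p -> vec q.
Hypothesis HD : is_linear D.

Lemma lin0 : D vzero = vzero.
Proof.
have e1 : (@vzero p) = vscal 0 vzero by apply: functional_extensionality => i; rewrite /vscal /vzero; ring.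
rewrite e1 (proj2 (HD vzero vzero 0)); apply: functional_extensionality => i; rewrite /vscal /vzero; ring.
Qed.

Lemma lin_sum (I : Type) (r : seq I) (c : I -> R) (E : I -> vec p) :
  D (fun j => \big[Rplus/0]_(i <- r) (c i * E i j)) = fun k => \big[Rplus/0]_(i <- r) (c i * D (E i) k).
Proof.
elim: r => [|a r IH].
  have -> : (fun j : 'I_p => \big[Rplus/0]_(i <- [::]) (c i * E i j)) = vzero.
    by apply: functional_extensionality => j; rewrite big_nil.
  rewrite lin0; apply: functional_extensionality => j; by rewrite big_nil.
have -> : (fun j => \big[Rplus/0]_(i <- a :: r) (c i * E i j)) =
   vadd (vscal (c a) (E a)) (fun j => \big[Rplus/0]_(i <- r) (c i * E i j)).
  by apply: functional_extensionality => j; rewrite big_cons.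
rewrite (proj1 (HD _ _ 0)) (proj2 (HD _ vzero (c a))) IH.
apply: functional_extensionality => j; by rewrite big_cons.
Qed.

Definition ebase (i j : 'I_p) : R := if i == j then 1 else 0.

Lemma vec_decomp (v : vec p) : v = fun j => \big[Rplus/0]_(i <- index_enum 'I_p) (v i * ebase i j).
Proof.
apply: functional_extensionality => j.
rewrite (bigD1_seq j) ?index_enum_uniq ?mem_index_enum //= big1_seq.
  rewrite /ebase eqxx; ring.
move=> i /andP [hij _]; rewrite /ebase (negbTE hij); ring.
Qed.

Lemma lin_bounded : exists M, forall v : vec p, norm v <= 1 -> norm (D v) <= M.
Proof.
pose w i := D (ebase i).
pose Mk k := \big[Rplus/0]_(i <- index_enum 'I_p) Rabs (w i k).
exists (sqrt (\big[Rplus/0]_(k <- index_enum 'I_q) (Mk k * Mk k))).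
move=> v hv.
have hvi : forall i, Rabs (v i) <= 1.
  move=> i; have := coord_le v i; rewrite -norm_sq.
  have := norm_ge0 v => h0 h1.
  have : v i * v i <= 1 by nra.
  move=> h; rewrite -[1]Rabs_R1; apply: Rsqr_le_abs_0; rewrite /Rsqr; lra.
have eD : D v = fun k => \big[Rplus/0]_(i <- index_enum 'I_p) (v i * w i k).
  by rewrite {1}(vec_decomp v) lin_sum.
rewrite /norm; apply: sqrt_le_1_alt; rewrite eD /dot.
apply: sum_le => k.
have hb : Rabs (\big[Rplus/0]_(i <- index_enum 'I_p) (v i * w i k)) <= Mk k.
  apply: Rle_trans; first apply: sum_abs.
  apply: sum_le => i; rewrite Rabs_mult; have := hvi i; have := Rabs_pos (w i k); have := Rabs_pos (v i); nra.
have := Rabs_pos (\big[Rplus/0]_(i <- index_enum 'I_p) (v i * w i k)).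
set S := \big[Rplus/0]_(i <- _) _ in hb *.
move=> h0.
have -> : S * S = Rabs S * Rabs S by rewrite -Rabs_mult Rabs_pos_eq //; nra.
nra.
Qed.

Lemma opnorm_spec : 0 <= opnorm D /\ forall v, norm (D v) <= opnorm D * norm v.
Proof.
pose P := fun r => exists v : vec p, norm v <= 1 /\ r = norm (D v).
have hlub : exists s, is_lub P s.
  have [M hM] := lin_bounded.
  have hb : bound P by exists M => r [v [hv ->]]; exact: hM.
  have hne : exists r, P r by exists 0, vzero; rewrite norm0 lin0 norm0; split=> //; lra.
  have [s hs] := completeness P hb hne. by exists s.
have hs := epsilon_spec (inhabits 0) (is_lub P) hlub.
rewrite -/(opnorm D) in hs.
have h0 : 0 <= opnorm D.
  apply: (proj1 hs); exists vzero; rewrite norm0 lin0 norm0; split=> //; lra.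
split=> // v.
have hn := norm_ge0 v.
destruct (Rle_lt_or_eq_dec 0 (norm v) hn) as [hp|he].
- set w := vscal (/ norm v) v.
  have hw : norm w = 1 by rewrite /w norm_scal Rabs_pos_eq; [field; lra | left; apply Rinv_0_lt_compat; lra].
  have hDw : norm (D w) = / norm v * norm (D v).
    by rewrite /w (proj2 (HD v vzero _)) norm_scal Rabs_pos_eq //; left; apply Rinv_0_lt_compat; lra.
  have : norm (D w) <= opnorm D by apply: (proj1 hs); exists w; split=> //; lra.
  rewrite hDw => h.
  have := Rmult_le_compat_l (norm v) _ _ hn h.
  rewrite -Rmult_assoc Rinv_r; [nra|lra].
- have hv : v = vzero.
    apply: functional_extensionality => i; rewrite /vzero.
    have := coord_le v i; rewrite -norm_sq -he; move=> h; nra.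
  rewrite hv lin0 !norm0; nra.
Qed.
End Lin.

Lemma deriv_eq f t l l' : derivable_pt_lim f t l -> l = l' -> derivable_pt_lim f t l'.
Proof. by move=> h <-. Qed.

Lemma sum_deriv (I : Type) (r : seq I) (P : pred I) (F : I -> R -> R) (l : I -> R) t :
  (forall i, derivable_pt_lim (F i) t (l i)) ->
  derivable_pt_lim (fun s => \big[Rplus/0]_(i <- r | P i) F i s) t (\big[Rplus/0]_(i <- r | P i) l i).
Proof.
move=> H; elim: r => [|a r IH].
  have -> : (fun s => \big[Rplus/0]_(i <- [::] | P i) F i s) = fun _ => 0.
    by apply: functional_extensionality => s; rewrite big_nil.
  rewrite big_nil; apply: derivable_pt_lim_const.
have -> : (fun s => \big[Rplus/0]_(i <- a :: r | P i) F i s) =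
   fun s => (if P a then F a s else 0) + \big[Rplus/0]_(i <- r | P i) F i s.
  apply: functional_extensionality => s; rewrite big_cons; case: (P a) => //; ring.
rewrite big_cons. case: (P a).
- exact: (derivable_pt_lim_plus (F a) _ t _ _ (H a) IH).
- apply: deriv_eq; first exact: (derivable_pt_lim_plus (fun _ => 0) _ t _ _ (derivable_pt_lim_const 0 t) IH).
  ring.
Qed.

Lemma dsq n (u : R -> vec n) (du : vec n) t :
  (forall i, derivable_pt_lim (fun s => u s i) t (du i)) ->
  derivable_pt_lim (fun s => dot (u s) (u s)) t (2 * dot (u t) du).
Proof.
move=> H; rewrite /dot -sum_mull.
apply: (@sum_deriv _ _ _ (fun i s => u s i * u s i) (fun i => 2 * (u t i * du i))) => i.
apply: deriv_eq; first exact: (derivable_pt_lim_mult (fun s => u s i) (fun s => u s i) t _ _ (H i) (H i)).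
cbv beta; ring.
Qed.

Section XN.
Context {n m : nat}.
Definition seg (x D : X n m) (th : R) : X n m := xadd x (xscal th D).

Lemma xnorm_scal h (D : X n m) : xnorm (xscal h D) = Rabs h * xnorm D.
Proof.
rewrite /xnorm /xscal /= !dotZl !dotZr -!Rmult_assoc -Rmult_plus_distr_l sqrt_mult; [|nra|].
  by rewrite -[h * h]/(Rsqr h) sqrt_Rsqr_abs.
have := dot_ge0 D.1; have := dot_ge0 D.2; lra.
Qed.

Lemma xnorm_ge0 (D : X n m) : 0 <= xnorm D.
Proof. apply: sqrt_pos. Qed.

Lemma seg_diff x D th h : xsub (seg x D (th + h)) (seg x D th) = xscal h D.
Proof.
rewrite /seg /xsub /xadd /xscal /=; congr pair; apply: functional_extensionality => i;
rewrite /vsub /vadd /vscal; ring.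
Qed.

Lemma H_deriv k (F : X n m -> vec k) DA DZ (w : vec k) x D th :
  frechet F DA DZ (seg x D th) ->
  derivable_pt_lim (fun s => dot w (F (seg x D s))) th (dot w (vadd (DA D.1) (DZ D.2))).
Proof.
move=> [hA [hZ hF]] eps heps.
set c := norm w * xnorm D + 1.
have hc : 0 < c by have := norm_ge0 w; have := xnorm_ge0 D; rewrite /c; nra.
have [del [hdel hd]] := hF (eps / (2 * c)) ltac:(apply: Rdiv_lt_0_compat; lra).
have hdel' : 0 < del / (xnorm D + 1) by apply: Rdiv_lt_0_compat => //; have := xnorm_ge0 D; lra.
exists (mkposreal _ hdel') => h hh0 hh /=.
have hx : xnorm (xsub (seg x D (th + h)) (seg x D th)) < del.
  rewrite seg_diff xnorm_scal.
  have := xnorm_ge0 D; have := Rabs_pos h => h1 h2.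
  move: hh => /=; rewrite /Rdiv => hh.
  have : Rabs h * (xnorm D + 1) < del.
    have e : del = del * / (xnorm D + 1) * (xnorm D + 1) by field; lra.
    rewrite {1}e; apply: Rmult_lt_compat_r; lra.
  nra.
have := hd _ hx. rewrite seg_diff xnorm_scal /xscal /=.
rewrite (proj2 (hA D.1 D.1 h)) (proj2 (hZ D.2 D.2 h)).
set V := vadd (DA D.1) (DZ D.2).
set G := vsub (F (seg x D (th + h))) (F (seg x D th)).
have -> : vadd (vscal h (DA D.1)) (vscal h (DZ D.2)) = vscal h V.
  by apply: functional_extensionality => i; rewrite /vadd /vscal /V /vadd; ring.
move=> hb.
have e : (dot w (F (seg x D (th + h))) - dot w (F (seg x D th))) / h - dot w V
          = dot w (vsub G (vscal h V)) / h.
  rewrite dotBr dotZr /G dotBr; field; exact hh0.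
rewrite e /Rdiv Rabs_mult Rabs_inv.
have := CS w (vsub G (vscal h V)) => hcs.
have hpos : 0 < Rabs h by apply: Rabs_pos_lt.
have hle : Rabs (dot w (vsub G (vscal h V))) <= norm w * (eps / (2 * c) * (Rabs h * xnorm D)).
  apply: Rle_trans; first exact: hcs.
  apply: Rmult_le_compat_l; first exact: norm_ge0. exact: hb.
apply: (Rmult_lt_reg_r (Rabs h)) => //.
rewrite Rmult_assoc Rinv_l; last lra.
apply: Rle_lt_trans; first (rewrite Rmult_1_r; exact: hle).
have -> : norm w * (eps / (2 * c) * (Rabs h * xnorm D)) = (eps * Rabs h) * (norm w * xnorm D / (2 * c)) by field; lra.
have : norm w * xnorm D / (2 * c) < 1.
  apply: (Rmult_lt_reg_r (2 * c)); first lra.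
  rewrite /Rdiv Rmult_assoc Rinv_l; last lra. rewrite /c; have := norm_ge0 w; have := xnorm_ge0 D; nra.
have : 0 < eps * Rabs h by nra.
have : 0 <= norm w * xnorm D / (2 * c) by apply: Rmult_le_pos; [have := norm_ge0 w; have := xnorm_ge0 D; nra | left; apply Rinv_0_lt_compat; lra].
nra.
Qed.
End XN.

Lemma deriv_cont f x l : derivable_pt_lim f x l ->
  forall eps, 0 < eps -> exists del, 0 < del /\ forall y, Rabs (y - x) < del -> Rabs (f y - f x) < eps.
Proof.
move=> H eps he.
have [d hd] := H 1 Rlt_0_1.
have hl : 0 < Rabs l + 1 by have := Rabs_pos l; lra.
exists (Rmin d (eps / (Rabs l + 1))); split.
  apply: Rmin_pos; [exact: cond_pos | apply: Rdiv_lt_0_compat; lra].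
move=> y hy.
destruct (Req_dec (y - x) 0) as [e|ne].
  have -> : y = x by lra. rewrite Rminus_diag Rabs_R0; lra.
have h1 : Rabs (y - x) < d by have := Rmin_l d (eps / (Rabs l + 1)); lra.
have h2 : Rabs (y - x) < eps / (Rabs l + 1) by have := Rmin_r d (eps / (Rabs l + 1)); lra.
have := hd (y - x) ne h1. have -> : x + (y - x) = y by ring.
move=> hq.
have eq : f y - f x = ((f y - f x) / (y - x) - l) * (y - x) + l * (y - x) by field.
rewrite eq.
apply: Rle_lt_trans; first apply: Rabs_triang.
rewrite !Rabs_mult.
have hp : 0 < Rabs (y - x) by apply: Rabs_pos_lt.
have : Rabs (y - x) * (Rabs l + 1) < eps.
  have e2 : eps = eps / (Rabs l + 1) * (Rabs l + 1) by field; lra.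
  rewrite {1}e2; apply: Rmult_lt_compat_r; lra.
have := Rabs_pos ((f y - f x) / (y - x) - l). have := Rabs_pos l. nra.
Qed.

Section Main.
Variables (n m : nat) (f : X n m -> vec n) (g : X n m -> vec m)
  (U : X n m -> Prop)
  (Daf : X n m -> vec n -> vec n) (Dzf : X n m -> vec m -> vec n)
  (Dag : X n m -> vec n -> vec m) (Dzg : X n m -> vec m -> vec m)
  (alpha ell : X n m -> R) (c1 : R).
Hypotheses (HUc : is_convex_X U)
  (Hf : C1_on U f Daf Dzf) (Hg : C1_on U g Dag Dzg)
  (Halpha_c : cont_on_R U alpha) (Hc1 : 0 < c1)
  (Hell_p : forall x, U x -> 0 <= ell x)
  (Hfa : forall x, U x -> forall a' : vec n, dot a' (Daf x a') >= alpha x * norm a' ^ 2)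
  (Hgz : forall x, U x -> forall z' : vec m, dot z' (Dzg x z') <= ell x * norm z' ^ 2)
  (Hdom : forall x, U x -> alpha x >= ell x + opnorm (Dzf x) + opnorm (Dag x) + c1).

Lemma core y a z : U y ->
  dot a (vadd (Daf y a) (Dzf y z)) - dot z (vadd (Dag y a) (Dzg y z)) >=
  alpha y * norm a ^ 2 - (opnorm (Dzf y) + opnorm (Dag y)) * norm a * norm z - ell y * norm z ^ 2.
Proof.
move=> hy.
have [_ [hlz _]] := (proj1 Hf) y hy.
have [hla _] := (proj1 Hg) y hy.
have [hp hP] := opnorm_spec _ _ _ hlz.
have [hq hQ] := opnorm_spec _ _ _ hla.
rewrite !dotDr.
have h1 := Hfa y hy a. have h2 := Hgz y hy z.
have h3 := dot_ge a (Dzf y z). have h4 := dot_le z (Dag y a).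
have h5 := hP z. have h6 := hQ a.
have na := norm_ge0 a. have nz := norm_ge0 z.
have : norm a * norm (Dzf y z) <= norm a * (opnorm (Dzf y) * norm z) by apply: Rmult_le_compat_l.
have : norm z * norm (Dag y a) <= norm z * (opnorm (Dag y) * norm a) by apply: Rmult_le_compat_l.
nra.
Qed.

Lemma opn_ge0 y : U y -> 0 <= opnorm (Dzf y) /\ 0 <= opnorm (Dag y).
Proof.
move=> hy.
have [_ [hlz _]] := (proj1 Hf) y hy.
have [hla _] := (proj1 Hg) y hy.
by split; [exact: (proj1 (opnorm_spec _ _ _ hlz)) | exact: (proj1 (opnorm_spec _ _ _ hla))].
Qed.

Variables (t0 : R) (phi1 phi2 : R -> X n m).
Hypotheses (S1 : solves_on f g phi1 t0) (S2 : solves_on f g phi2 t0)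
  (U1 : forall t, 0 <= t <= t0 -> U (phi1 t)) (U2 : forall t, 0 <= t <= t0 -> U (phi2 t)).

Definition Dlt (t : R) : X n m := xsub (phi1 t) (phi2 t).
Definition Lf t := Lfun (phi2 t) (phi1 t).
Definition Ld t := 2 * (dot (Dlt t).1 (vsub (f (phi1 t)) (f (phi2 t))) - dot (Dlt t).2 (vsub (g (phi1 t)) (g (phi2 t)))).

Lemma Lf_eq t : Lf t = dot (Dlt t).1 (Dlt t).1 - dot (Dlt t).2 (Dlt t).2.
Proof. by rewrite /Lf /Lfun !norm_sq. Qed.

Lemma L_deriv t : 0 <= t <= t0 -> derivable_pt_lim Lf t (Ld t).
Proof.
move=> ht.
have -> : Lf = fun s => dot (Dlt s).1 (Dlt s).1 - dot (Dlt s).2 (Dlt s).2.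
  by apply: functional_extensionality => s; rewrite Lf_eq.
have [a1 z1] := S1 t ht. have [a2 z2] := S2 t ht.
apply: deriv_eq; first apply: (derivable_pt_lim_minus (fun s => dot (Dlt s).1 (Dlt s).1) (fun s => dot (Dlt s).2 (Dlt s).2)).
- apply: (dsq _ (fun s => (Dlt s).1)) => i.
  exact: (derivable_pt_lim_minus (fun s => (phi1 s).1 i) (fun s => (phi2 s).1 i) t _ _ (a1 i) (a2 i)).
- apply: (dsq _ (fun s => (Dlt s).2)) => i.
  exact: (derivable_pt_lim_minus (fun s => (phi1 s).2 i) (fun s => (phi2 s).2 i) t _ _ (z1 i) (z2 i)).
rewrite /Ld /vsub /=. rewrite /Rminus. ring.
Qed.

Lemma seg1 (x y : X n m) : seg x (xsub y x) 1 = y.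
Proof.
case: y => y1 y2; rewrite /seg /xadd /xscal /xsub /=; congr pair;
apply: functional_extensionality => i; rewrite /vadd /vscal /vsub; ring.
Qed.
Lemma seg0 (x D : X n m) : seg x D 0 = x.
Proof.
case: x => y1 y2; rewrite /seg /xadd /xscal /xsub /=; congr pair;
apply: functional_extensionality => i; rewrite /vadd /vscal /vsub; ring.
Qed.

Lemma key t : 0 <= t <= t0 -> exists th, 0 <= th <= 1 /\ U (seg (phi2 t) (Dlt t) th) /\
  Ld t / 2 >= alpha (seg (phi2 t) (Dlt t) th) * norm (Dlt t).1 ^ 2
     - (opnorm (Dzf (seg (phi2 t) (Dlt t) th)) + opnorm (Dag (seg (phi2 t) (Dlt t) th))) * norm (Dlt t).1 * norm (Dlt t).2
     - ell (seg (phi2 t) (Dlt t) th) * norm (Dlt t).2 ^ 2.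
Proof.
move=> ht.
set x := phi2 t; set D := Dlt t.
have hU : forall c, 0 <= c <= 1 -> U (seg x D c).
  move=> c hc; exact: (HUc x (phi1 t) c (U2 t ht) (U1 t ht) hc).
pose H := fun s => dot D.1 (f (seg x D s)) - dot D.2 (g (seg x D s)).
pose H' := fun s => dot D.1 (vadd (Daf (seg x D s) D.1) (Dzf (seg x D s) D.2))
   - dot D.2 (vadd (Dag (seg x D s) D.1) (Dzg (seg x D s) D.2)).
have hd : forall c, 0 <= c <= 1 -> derivable_pt_lim H c (H' c).
  move=> c hc.
  apply: (derivable_pt_lim_minus (fun s => dot D.1 (f (seg x D s))) (fun s => dot D.2 (g (seg x D s)))).
  - exact: H_deriv ((proj1 Hf) _ (hU c hc)).
  - exact: H_deriv ((proj1 Hg) _ (hU c hc)).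
have [c [hc hc']] := MVT_cor2 H H' 0 1 Rlt_0_1 hd.
exists c; split; first lra. split; first (apply: hU; lra).
have e : Ld t / 2 = H 1 - H 0.
  rewrite /H /D /Dlt -/x seg1 seg0 /Ld !dotBr -/(Dlt t) -/D -/x; field.
rewrite e hc Rminus_0_r Rmult_1_r /H'.
exact: core (hU c ltac:(lra)).
Qed.

Lemma seg_close (x xs D : X n m) th : 0 <= th <= 1 ->
  dot (xsub (seg x D th) xs).1 (xsub (seg x D th) xs).1 + dot (xsub (seg x D th) xs).2 (xsub (seg x D th) xs).2
  <= 2 * dot (vsub x.1 xs.1) (vsub x.1 xs.1) + 2 * dot D.1 D.1 + 2 * dot (vsub x.2 xs.2) (vsub x.2 xs.2) + 2 * dot D.2 D.2.
Proof.
move=> hth.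
have gen : forall k (a b d : vec k), dot (vsub (vadd a (vscal th d)) b) (vsub (vadd a (vscal th d)) b)
     <= 2 * dot (vsub a b) (vsub a b) + 2 * dot d d.
  move=> k a b d; rewrite /dot -!sum_mull -big_split /=; apply: sum_le => i.
  rewrite /vsub /vadd /vscal.
  have : th * th <= 1 by nra.
  have : 0 <= d i * d i by nra.
  move=> h1 h2.
  have h3 : th * th * (d i * d i) <= d i * d i.
    have := Rmult_le_compat_r _ _ _ h1 h2. lra.
  have h4 := pow2_ge_0 (a i - b i - th * d i).
  nra.
have := gen _ x.1 xs.1 D.1. have := gen _ x.2 xs.2 D.2.
rewrite /xsub /seg /xadd /xscal /=. lra.
Qed.

Lemma main_sec : Lf 0 >= 0 -> forall t1, 0 <= t1 <= t0 -> Lf t1 >= 0.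
Proof.
move=> h0 t1 ht1; apply: Rnot_lt_ge => hneg.
pose A τ := 0 <= τ <= t1 /\ Lf τ >= 0.
have hb : bound A by exists t1 => τ [hτ _]; lra.
have hne : exists τ, A τ by exists 0; split => //; lra.
have [s [hsu hsl]] := completeness A hb hne.
have s0 : 0 <= s by apply: hsu; split => //; lra.
have st1 : s <= t1 by apply: hsl => τ [hτ _]; lra.
have hst : 0 <= s <= t0 by lra.
have hafter : forall τ, s < τ <= t1 -> Lf τ < 0.
  move=> τ hτ; apply: Rnot_ge_lt => h.
  have : τ <= s by apply: hsu; split => //; lra.
  lra.
have hLs : Lf s >= 0.
  apply: Rnot_lt_ge => hl.
  have [del [hdel hd]] := deriv_cont _ _ _ (L_deriv s hst) (- Lf s) ltac:(lra).
  have : s <= s - del / 2.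
    apply: hsl => τ [hτ hL].
    destruct (Rle_lt_dec τ (s - del / 2)) as [h|h] => //.
    have hτs : τ <= s by apply: hsu.
    have : Rabs (τ - s) < del by rewrite Rabs_left1; lra.
    move=> /hd; move: hL; have := Rle_abs (Lf τ - Lf s); lra.
  lra.
have hs1 : s < t1.
  destruct (Rle_lt_or_eq_dec _ _ st1) as [h|h] => //. subst s; lra.
set u := norm (Dlt s).1. set v := norm (Dlt s).2.
have eL : Lf s = u ^ 2 - v ^ 2 by [].
have hu0 : 0 <= u := norm_ge0 _. have hv0 : 0 <= v := norm_ge0 _.
destruct (Rle_lt_or_eq_dec 0 u hu0) as [hu|hu].
-
  have [th [hth [hUy hk]]] := key s hst.
  set y := seg (phi2 s) (Dlt s) th in hUy hk.
  have [hp hq] := opn_ge0 y hUy.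
  have hdy := Hdom y hUy. have hly := Hell_p y hUy.
  rewrite -/u -/v in hk.
  have hvu : v <= u by nra.
  have h1 : (opnorm (Dzf y) + opnorm (Dag y)) * u * v <= (opnorm (Dzf y) + opnorm (Dag y)) * u * u.
    apply: Rmult_le_compat_l => //; apply: Rmult_le_pos; lra.
  have h2 : ell y * v ^ 2 <= ell y * u ^ 2 by apply: Rmult_le_compat_l => //; nra.
  have h3 : 0 < c1 * u ^ 2 by apply: Rmult_lt_0_compat => //; nra.
  have h4 : 0 <= (alpha y - ell y - (opnorm (Dzf y) + opnorm (Dag y)) - c1) * (u * u).
    apply: Rmult_le_pos; nra.
  have hLd : Ld s > 0 by move: hk; rewrite /= !Rmult_1_r in h2 h3 *; nra.
  have [d hd] := L_deriv s hst (Ld s / 2) ltac:(lra).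
  have hdp := cond_pos d.
  set h := Rmin (d / 2) ((t1 - s) / 2).
  have hh0 : 0 < h by apply: Rmin_pos; lra.
  have hh1 : h <= (t1 - s) / 2 by apply: Rmin_r.
  have hh2 : h <= d / 2 by apply: Rmin_l.
  have := hd h ltac:(lra) ltac:(rewrite Rabs_right; lra).
  move=> habs.
  have hq' : (Lf (s + h) - Lf s) / h > 0.
    have := Rle_abs (Ld s - (Lf (s + h) - Lf s) / h).
    rewrite -Rabs_Ropp Ropp_minus_distr in habs. lra.
  have : Lf (s + h) - Lf s > 0.
    have -> : Lf (s + h) - Lf s = (Lf (s + h) - Lf s) / h * h by field; lra.
    nra.
  have := hafter (s + h) ltac:(lra). lra.
-
  rewrite -hu in eL.
  have hv : v = 0 by nra.
  have hLs0 : Lf s = 0 by rewrite eL hv; ring.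
  set xs := phi2 s.
  have hUx : U xs := U2 s hst.
  have [da [hda hca]] := Halpha_c xs hUx 1 Rlt_0_1.
  set K := alpha xs + 1.
  pose Q1 τ := dot (vsub (phi2 τ).1 xs.1) (vsub (phi2 τ).1 xs.1).
  pose Q2 τ := dot (Dlt τ).1 (Dlt τ).1.
  pose Q3 τ := dot (vsub (phi2 τ).2 xs.2) (vsub (phi2 τ).2 xs.2).
  pose Q4 τ := dot (Dlt τ).2 (Dlt τ).2.
  have [a1 z1] := S1 s hst. have [a2 z2] := S2 s hst.
  have dQ1 : exists l, derivable_pt_lim Q1 s l.
    eexists; apply: (dsq _ (fun τ => vsub (phi2 τ).1 xs.1)) => i.
    exact: (derivable_pt_lim_minus (fun τ => (phi2 τ).1 i) (fun _ => xs.1 i) s _ _ (a2 i) (derivable_pt_lim_const _ _)).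
  have dQ3 : exists l, derivable_pt_lim Q3 s l.
    eexists; apply: (dsq _ (fun τ => vsub (phi2 τ).2 xs.2)) => i.
    exact: (derivable_pt_lim_minus (fun τ => (phi2 τ).2 i) (fun _ => xs.2 i) s _ _ (z2 i) (derivable_pt_lim_const _ _)).
  have dQ2 : exists l, derivable_pt_lim Q2 s l.
    eexists; apply: (dsq _ (fun τ => (Dlt τ).1)) => i.
    exact: (derivable_pt_lim_minus (fun τ => (phi1 τ).1 i) (fun τ => (phi2 τ).1 i) s _ _ (a1 i) (a2 i)).
  have dQ4 : exists l, derivable_pt_lim Q4 s l.
    eexists; apply: (dsq _ (fun τ => (Dlt τ).2)) => i.
    exact: (derivable_pt_lim_minus (fun τ => (phi1 τ).2 i) (fun τ => (phi2 τ).2 i) s _ _ (z1 i) (z2 i)).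
  have vz : forall k (w : vec k), dot (vsub w w) (vsub w w) = 0.
    move=> k w; rewrite /dot big1 // => i _; rewrite /vsub; ring.
  have Q1s : Q1 s = 0 by apply: vz.
  have Q3s : Q3 s = 0 by apply: vz.
  have Q2s : Q2 s = 0 by rewrite /Q2 -norm_sq -/u -hu; ring.
  have Q4s : Q4 s = 0 by rewrite /Q4 -norm_sq -/v hv; ring.
  set e := da * da / 8.
  have he : 0 < e by rewrite /e; nra.
  have [l1 dl1] := dQ1. have [l2 dl2] := dQ2. have [l3 dl3] := dQ3. have [l4 dl4] := dQ4.
  have [d1 [hd1 c1']] := deriv_cont _ _ _ dl1 e he.
  have [d2 [hd2 c2']] := deriv_cont _ _ _ dl2 e he.
  have [d3 [hd3 c3']] := deriv_cont _ _ _ dl3 e he.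
  have [d4 [hd4 c4']] := deriv_cont _ _ _ dl4 e he.
  set dl := Rmin (Rmin d1 d2) (Rmin d3 d4).
  have hdl : 0 < dl by apply: Rmin_pos; apply: Rmin_pos.
  have close : forall τ, 0 <= τ - s < dl -> 0 <= τ <= t0 -> alpha (seg (phi2 τ) (Dlt τ) 0) < K \/ True.
    by right.
  have closeK : forall τ th, 0 <= τ - s < dl -> τ <= t0 -> 0 <= th <= 1 -> alpha (seg (phi2 τ) (Dlt τ) th) < K.
    move=> τ th hτ hτ0 hth.
    have hτ' : 0 <= τ <= t0 by lra.
    have hab : Rabs (τ - s) < dl by rewrite Rabs_right; lra.
    have ld1 : dl <= d1 by apply: Rle_trans; [apply: Rmin_l | apply: Rmin_l].
    have ld2 : dl <= d2 by apply: Rle_trans; [apply: Rmin_l | apply: Rmin_r].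
    have ld3 : dl <= d3 by apply: Rle_trans; [apply: Rmin_r | apply: Rmin_l].
    have ld4 : dl <= d4 by apply: Rle_trans; [apply: Rmin_r | apply: Rmin_r].
    have q1 := c1' τ ltac:(lra). have q2 := c2' τ ltac:(lra).
    have q3 := c3' τ ltac:(lra). have q4 := c4' τ ltac:(lra).
    rewrite Q1s Rminus_0_r in q1. rewrite Q2s Rminus_0_r in q2.
    rewrite Q3s Rminus_0_r in q3. rewrite Q4s Rminus_0_r in q4.
    have := Rle_abs (Q1 τ). have := Rle_abs (Q2 τ). have := Rle_abs (Q3 τ). have := Rle_abs (Q4 τ).
    move=> r4 r3 r2 r1.
    have hsc := seg_close (phi2 τ) xs (Dlt τ) th hth.
    have hUy : U (seg (phi2 τ) (Dlt τ) th) by exact: (HUc _ _ th (U2 τ hτ') (U1 τ hτ') hth).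
    have hxn : xnorm (xsub (seg (phi2 τ) (Dlt τ) th) xs) < da.
      rewrite /xnorm -(sqrt_square da); last lra.
      apply: sqrt_lt_1_alt; split.
        have := dot_ge0 (xsub (seg (phi2 τ) (Dlt τ) th) xs).1.
        have := dot_ge0 (xsub (seg (phi2 τ) (Dlt τ) th) xs).2. lra.
      rewrite /Q1 /Q2 /Q3 /Q4 in r1 r2 r3 r4 q1 q2 q3 q4.
      rewrite /e in q1 q2 q3 q4. lra.
    have := hca _ hUy hxn. have := Rle_abs (alpha (seg (phi2 τ) (Dlt τ) th) - alpha xs).
    rewrite /K; lra.
  set s' := Rmin (s + dl / 2) t1.
  have hs'1 : s' <= t1 by apply: Rmin_r.
  have hs'2 : s' <= s + dl / 2 by apply: Rmin_l.
  have hss' : s < s' by apply: Rmin_glb_lt; lra.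
  pose E τ := exp (- (2 * K) * τ) * Lf τ.
  pose E' τ := (exp (- (2 * K) * τ) * (- (2 * K))) * Lf τ + exp (- (2 * K) * τ) * Ld τ.
  have hE : forall c, s <= c <= s' -> derivable_pt_lim E c (E' c).
    move=> c hc.
    have hc0 : 0 <= c <= t0 by lra.
    apply: (derivable_pt_lim_mult (fun τ => exp (- (2 * K) * τ)) Lf c).
    - apply: (derivable_pt_lim_comp (fun τ => - (2 * K) * τ) exp).
      + apply: deriv_eq; first exact: (derivable_pt_lim_scal id (- (2 * K)) c 1 (derivable_pt_lim_id c)).
        ring.
      + exact: derivable_pt_lim_exp.
    - exact: L_deriv.
  have [c [hmvt hc]] := MVT_cor2 E E' s s' hss' hE.
  have hEs : E s = 0 by rewrite /E hLs0; ring.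
  have hc0 : 0 <= c <= t0 by lra.
  have hLc : Lf c < 0 by apply: hafter; lra.
  have [th [hth [hUy hk]]] := key c hc0.
  have hKy := closeK c th ltac:(lra) ltac:(lra) hth.
  set y := seg (phi2 c) (Dlt c) th in hUy hk hKy.
  have [hp hq] := opn_ge0 y hUy.
  have hdy := Hdom y hUy. have hly := Hell_p y hUy.
  set uc := norm (Dlt c).1 in hk. set vc := norm (Dlt c).2 in hk.
  have eLc : Lf c = uc ^ 2 - vc ^ 2 by [].
  have huc : 0 <= uc := norm_ge0 _. have hvc : 0 <= vc := norm_ge0 _.
  have hucv : uc <= vc by nra.
  have i1 : 0 <= (alpha y - ell y - opnorm (Dzf y) - opnorm (Dag y)) * vc ^ 2 by apply: Rmult_le_pos; nra.
  have i2 : 0 <= (opnorm (Dzf y) + opnorm (Dag y)) * (vc * (vc - uc)) by apply: Rmult_le_pos; nra.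
  have hLdc : Ld c / 2 >= alpha y * Lf c by rewrite eLc; nra.
  have hLdc2 : Ld c >= 2 * K * Lf c by nra.
  have hex := exp_pos (- (2 * K) * c).
  have hE'c : E' c >= 0.
    rewrite /E'. have -> : exp (- (2 * K) * c) * - (2 * K) * Lf c + exp (- (2 * K) * c) * Ld c
                       = exp (- (2 * K) * c) * (Ld c - 2 * K * Lf c) by ring.
    apply: Rle_ge; apply: Rmult_le_pos; lra.
  have hEs' : E s' >= 0 by nra.
  have hex' := exp_pos (- (2 * K) * s').
  have := hafter s' ltac:(lra).
  rewrite /E in hEs'. nra.
Qed.

End Main.

Theorem lemma2p1 (n m : nat) (f : X n m -> vec n) (g : X n m -> vec m)
  (U : X n m -> Prop) (d : R)
  (Daf : X n m -> vec n -> vec n) (Dzf : X n m -> vec m -> vec n)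
  (Dag : X n m -> vec n -> vec m) (Dzg : X n m -> vec m -> vec m)
  (alpha ell : X n m -> R) (c1 : R)
  (* Hypothesis 1 *)
  (HUo : is_open_X U) (HUc : is_convex_X U) (Hd : 0 < d)
  (Hcone : forall x x', U x -> U x' -> cone x x' -> boxB d x x')
  (* Hypothesis 2 *)
  (Hf : C1_on U f Daf Dzf) (Hg : C1_on U g Dag Dzg)
  (Halpha_c : cont_on_R U alpha) (Hell_c : cont_on_R U ell) (Hc1 : 0 < c1)
  (Halpha_p : forall x, U x -> 0 < alpha x)
  (Hell_p : forall x, U x -> 0 <= ell x)
  (Hfa : forall x, U x -> forall a' : vec n, dot a' (Daf x a') >= alpha x * norm a' ^ 2)
  (Hgz : forall x, U x -> forall z' : vec m, dot z' (Dzg x z') <= ell x * norm z' ^ 2)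
  (Hdom : forall x, U x -> alpha x >= ell x + opnorm (Dzf x) + opnorm (Dag x) + c1)
  (* the statement *)
  (x1 x2 : X n m) (t0 : R) (phi1 phi2 : R -> X n m) :
  U x1 -> U x2 -> 0 < t0 -> cone x1 x2 ->
  phi1 0 = x1 -> phi2 0 = x2 ->
  solves_on f g phi1 t0 -> solves_on f g phi2 t0 ->
  (forall t, 0 <= t <= t0 -> U (phi1 t)) ->
  (forall t, 0 <= t <= t0 -> U (phi2 t)) ->
  forall t, 0 <= t <= t0 -> cone (phi1 t) (phi2 t).
Proof.
move=> hx1 hx2 ht0 hc e1 e2 S1 S2 U1 U2 t ht.
have := @main_sec n m f g U Daf Dzf Dag Dzg alpha ell c1 HUc Hf Hg Halpha_c Hc1 Hell_p Hfa Hgz Hdom t0 phi1 phi2 S1 S2 U1 U2.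
rewrite /Lf e1 e2. move=> h; exact: (h hc t ht).
Qed.
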